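(* Let $G$ be a finite group with identity $\xi$, let $S$ be a non-empty inverse-closed subset of $G$ with $\xi\notin S$, and let $d_\Gamma$ be the graph metric of the Cayley graph $\mathrm{Cay}(G,S)$. Let $d$ be a positive integer and let $C\subseteq G$ be a code with $\min\{d_\Gamma(c,c')\,:\,c,c'\in C,\ c\neq c'\}\geq d$. Let $H$ be a subgroup of $G$, let $X=\{Ha_1,\dots,Ha_m\}$ be the set of right cosets of $H$ in $G$ (so $m=|G|/|H|$), and let $T=S^{\lfloor\frac{d-1}{2}\rfloor}\cup\{\xi\}$. Then the optimal value of the integer program $$\text{maximize } \sum_{i=1}^{m}x_i\quad\text{subject to}\quad \Big(\sum_{t\in T}\rho_X^G(t)\Big)(x_1,\ldots,x_m)^t\leq |H|\,\mathbf{1},\qquad x_i\in\mathbb{Z},\ x_i\geq 0\ (1\leq i\leq m),$$ is at least $|C|$ (i.e., it is an upper bound on $|C|$), where $\mathbf{1}$ is the all-ones column vector of length $m$ and the inequality is entrywise.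
   Context: $\mathrm{Cay}(G,S)$ is the simple graph with vertex set $G$ in which $g,h$ are adjacent iff $gh^{-1}\in S$; $d_\Gamma(g,h)$ is the length of a shortest path between $g$ and $h$. For a positive integer $r$, $S^r=\{s_1\cdots s_t : s_1,\dots,s_t\in S,\ 1\leq t\leq r\}$. For the right cosets ordered as $Ha_1<\dots<Ha_m$, $\rho_X^G(g)$ is the $m\times m$ matrix whose $(i,j)$ entry is $1$ if $Ha_ig=Ha_j$ and $0$ otherwise. *)

(* Defs.v *)
From HB Require Import structures.
From mathcomp Require Import all_boot all_order all_algebra all_fingroup.
Set Implicit Arguments. Unset Strict Implicit. Unset Printing Implicit Defensive.
Import GRing.Theory Num.Theory.

Local Open Scope group_scope.

(* Adjacency in Cay(G,S), G = the whole finGroupType gT: g ~ h iff g h^-1 \in S. *)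
Definition cay_adj (gT : finGroupType) (S : {set gT}) : rel gT :=
  fun g h => g * h^-1 \in S.

Definition cay_walk (gT : finGroupType) (S : {set gT}) (g h : gT) (k : nat) : Prop :=
  exists p : seq gT, size p = k /\ path (cay_adj S) g p /\ last g p = h.

(* d_Gamma(g,h) >= d : there is no walk (hence no path) of length < d from g to h
   (distance +oo if disconnected). *)
Definition cay_dist_ge (gT : finGroupType) (S : {set gT}) (g h : gT) (d : nat) : Prop :=
  forall k, (k < d)%N -> ~ cay_walk S g h k.

Definition Spow (gT : finGroupType) (S : {set gT}) (r : nat) : {set gT} :=
  [set x | [exists t : 'I_r.+1, (0 < t)%N &&
      [exists s : (nat_of_ord t).-tuple gT,
          all (fun y => y \in S) s && (x == \prod_(y <- s) y)]]].

(* rho_X^G(g) for X the right cosets of H in G = [set: gT], ordered by enum. *)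
Definition rho_coset (gT : finGroupType) (H : {group gT}) (g : gT)
  : 'M[int]_(#|rcosets H [set: gT]|) :=
  \matrix_(i, j) ((enum_val i :* g == enum_val j)%:R)%R.

(* Main.v *)
Require Import Defs.
From HB Require Import structures.
From mathcomp Require Import all_boot all_order all_algebra all_fingroup.
Import GRing.Theory Num.Theory.

Section Help.
Local Open Scope group_scope.
Lemma walk_prod (gT : finGroupType) (S : {set gT}) (w : seq gT) (g : gT) :
  all (fun y => y \in S) w -> cay_walk S ((\prod_(y <- w) y) * g) g (size w).
Proof.
elim: w => [|a w IH] /=.
  by move=> _; exists [::]; rewrite big_nil mul1g.
case/andP=> aS /IH [p [sp [pp lp]]].
exists ((\prod_(y <- w) y) * g :: p); split => //=; first by rewrite sp.
by rewrite /cay_adj big_cons -(mulgA a) mulgK aS; split.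
Qed.

Lemma prod_rev_inv (gT : finGroupType) (s : seq gT) :
  \prod_(y <- rev (map invg s)) y = (\prod_(y <- s) y)^-1.
Proof.
elim: s => [|a s IH] /=; first by rewrite big_nil invg1.
by rewrite rev_cons big_rcons IH big_cons invMg.
Qed.

Lemma T_word (gT : finGroupType) (S : {set gT}) r t :
  t \in Spow S r :|: [set 1] ->
  exists2 s : seq gT, all (fun y => y \in S) s & (size s <= r)%N /\ t = \prod_(y <- s) y.
Proof.
case/setUP.
  rewrite inE => /existsP [k /andP [_ /existsP [s /andP [sS /eqP ->]]]].
  exists s => //; split => //; rewrite size_tuple -ltnS; exact: ltn_ord.
by rewrite inE => /eqP ->; exists [::] => //; rewrite big_nil.
Qed.

Lemma T_inj (gT : finGroupType) (S : {set gT})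
  (S_inv : forall s, s \in S -> (s^-1)%g \in S) (d : nat) (d_gt0 : (0 < d)%N) (C : {set gT})
  (C_dist : forall c c', c \in C -> c' \in C -> c != c' -> cay_dist_ge S c c' d)
  t t' c c' :
  let T := (Spow S (d.-1)./2 :|: [set 1%g])%g in
  t \in T -> t' \in T -> c \in C -> c' \in C -> t * c = t' * c' -> c = c'.
Proof.
move=> T tT t'T cC c'C E.
case: (eqVneq c c') => // ne.
have := C_dist c c' cC c'C ne.
case/T_word: tT => s sS [ss te]; case/T_word: t'T => u uS [su t'e]; rewrite te t'e in E.
move=> D; exfalso.
have wS : all (fun y => y \in S) (rev (map invg s) ++ u).
  rewrite all_cat all_rev all_map andbC uS /=.
  by apply/allP => y ys /=; apply: S_inv; exact: (allP sS).
have := @walk_prod _ S _ c' wS.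
rewrite big_cat /= prod_rev_inv.
have -> : (\prod_(y <- s) y)^-1 * \prod_(y <- u) y * c' = c.
  by rewrite -mulgA -E mulgA mulVg mul1g.
apply: D.
rewrite size_cat size_rev size_map.
have h : (d.-1)./2 + (d.-1)./2 <= d.-1 by rewrite addnn -{2}(odd_double_half d.-1) leq_addl.
apply: (leq_ltn_trans (leq_add ss su)); apply: (leq_ltn_trans h).
by rewrite ltn_predL.
Qed.


Lemma sum_cosets (gT : finGroupType) (H : {group gT}) (C : {set gT}) :
  \sum_(i < #|rcosets H [set: gT]|) #|[set c in C | c^-1 \in enum_val i]| = #|C|.
Proof.
under eq_bigr => i _ do rewrite -sum1dep_card big_mkcondr /=.
rewrite exchange_big /= -[in RHS]sum1_card; apply: eq_bigr => c cC.
have Hc : H :* c^-1 \in rcosets H [set: gT] by apply/rcosetsP; exists c^-1; rewrite ?inE.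
rewrite (bigD1 (enum_rank_in Hc (H :* c^-1))) //= enum_rankK_in // rcoset_refl.
rewrite big1 ?addn0 // => i ne.
case: ifP => // ci; case/eqP: ne; apply: enum_val_inj; rewrite enum_rankK_in //.
have := enum_valP i; case/rcosetsP => a _ ea.
have : c^-1 \in H :* a by rewrite -ea.
by move/rcoset_eqP ->.

Qed.

Lemma row_bound (gT : finGroupType) (S : {set gT})
  (S_inv : forall s, s \in S -> (s^-1)%g \in S) (d : nat) (d_gt0 : (0 < d)%N) (C : {set gT})
  (C_dist : forall c c', c \in C -> c' \in C -> c != c' -> cay_dist_ge S c c' d)
  (H : {group gT}) (X : {set gT}) : X \in rcosets H [set: gT] ->
  (\sum_(t in (Spow S (d.-1)./2 :|: [set 1%g])%g) #|[set c in C | c^-1 \in X :* t]| <= #|H|)%N.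
Proof.
move=> /rcosetsP [a _ eX]; set T := (Spow S _ :|: _).
under eq_bigr => t _ do rewrite -sum1dep_card.
rewrite pair_big_dep /= sum1dep_card.
set P := [set p | _].
pose f (p : gT * gT) := p.2^-1 * p.1^-1.
have injf : {in P &, injective f}.
  move=> [t c] [t' c']; rewrite !in_set /= /f => /andP [tT /andP [cC _]] /andP [t'T /andP [c'C _]].
  rewrite -!invMg => /invg_inj E.
  have ecc : c = c'.
    have tT' : t \in T by move: tT; rewrite !inE.
    have t'T' : t' \in T by move: t'T; rewrite !inE.
    exact: (@T_inj _ S S_inv d d_gt0 C C_dist t t' c c' tT' t'T' cC c'C).
  by move: E; rewrite ecc /= => /mulIg ->.
rewrite -(card_in_imset injf) -(card_rcoset H a) -eX.
apply: subset_leq_card; apply/subsetP => y /imsetP [[t c]]; rewrite inE /= /f.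
by case/and3P => _ _; rewrite mem_rcoset => ? ->.
Qed.
End Help.

Theorem theorem2p14 (gT : finGroupType) (S : {set gT})
  (S_ne0 : S != set0)
  (S_inv : forall s, s \in S -> (s^-1)%g \in S)
  (S_1 : (1%g : gT) \notin S)
  (d : nat) (d_gt0 : (0 < d)%N)
  (C : {set gT})
  (C_dist : forall c c', c \in C -> c' \in C -> c != c' -> cay_dist_ge S c c' d)
  (H : {group gT}) :
  let T := (Spow S (d.-1)./2 :|: [set 1%g])%g in
  let A := (\sum_(t in T) rho_coset H t)%R in
  exists x : 'cV[int]_(#|rcosets H [set: gT]|),
    [/\ forall i, (0 <= x i 0)%R,
        forall i, ((A *m x) i 0 <= (#|H|)%:Z)%R
      & ((#|C|)%:Z <= \sum_i x i 0)%R].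
Proof.
move=> T A.
exists (\col_(i < #|rcosets H [set: gT]|) (#|[set c in C | (c^-1)%g \in (enum_val i : {set gT})]|)%:Z)%R.
split.
- by move=> i; rewrite mxE.
- move=> i; rewrite mxE.
  under eq_bigr => j _ do rewrite summxE mulr_suml.
  rewrite exchange_big /=.
  have Xi := enum_valP i.
  under eq_bigr => t _.
    have Ht : (enum_val i :* t)%g \in rcosets H [set: gT].
      by case/rcosetsP: Xi => a _ ->; rewrite -rcosetM; apply/rcosetsP; exists (a * t)%g; rewrite ?inE.
    rewrite (bigD1 (enum_rank_in Ht (enum_val i :* t)%g)) //= !mxE enum_rankK_in // eqxx mul1r.
    rewrite big1 ?addr0; last first.
      move=> j ne; rewrite !mxE; case: eqP => [e|]; last by rewrite mul0r.
      by case/eqP: ne; apply: enum_val_inj; rewrite enum_rankK_in.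
    over.
  under eq_bigr => t _ do rewrite -natz.
  rewrite /= -natr_sum natz lez_nat.
  exact: (@row_bound _ S S_inv d d_gt0 C C_dist H _ Xi).
- under eq_bigr => i _ do rewrite mxE.
  by rewrite -(big_morph Posz PoszD (erefl (Posz 0))) lez_nat sum_cosets.
Qed.
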